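(* Let $y:[t_0,\infty)\to[0,\infty)$ be a nondecreasing, nonnegative, differentiable function that is not identically zero, where $t_0>1$ is fixed. Let $0\le\delta<\tfrac45$. If there are constants $C_3,C_4>0$ such that $$y(t)\le C_3t^{\delta}y'(t)+C_4t^{\frac{5\delta-1}{2}}[y'(t)]^{\frac32}\quad\text{for all }t\ge t_0,$$ then $$\liminf_{t\to+\infty}t^{5\delta-4}y(t)>0.$$ *)

(* Defs.v *)
From HB Require Import structures.
From mathcomp Require Import all_boot all_order all_algebra.
From mathcomp Require Import all_classical all_reals all_analysis.

(* Main.v *)
Require Import Defs.
From HB Require Import structures.
From mathcomp Require Import all_boot all_order all_algebra.
From mathcomp Require Import all_classical all_reals all_analysis.
From mathcomp Require Import ring lra.
Import Order.TTheory GRing.Theory Num.Theory.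
Import numFieldNormedType.Exports.
Local Open Scope classical_set_scope.
Local Open Scope ring_scope.

Lemma der_ge0 (R : realType) (t0 : R) (y y' : R -> R)
  (hy_mono : forall s t, t0 <= s -> s <= t -> y s <= y t)
  (hy_der : forall t, t0 < t -> is_derive t 1 y (y' t)) x :
  t0 < x -> 0 <= y' x.
Proof.
move=> hx; have hd := hy_der x hx.
rewrite -(@derive_val _ _ _ _ _ _ _ hd) /derive.
have cv := @ex_derive _ _ _ _ _ _ _ hd.
rewrite (cvg_at_rightE _ _ cv).
apply: limr_ge.
  by apply/cvg_ex; eexists; apply: cvg_dnbhs_at_right; apply: cv.
near=> h.
have h0 : 0 < h by near: h; exact: nbhs_right_gt.
rewrite /= scaler1 /shift /=.
apply: mulr_ge0; first by rewrite invr_ge0 ltW.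
rewrite subr_ge0; apply: hy_mono; rewrite ?ltW //.
lra.
Unshelve. all: end_near.
Qed.

Lemma step (R : realType) (t0 delta C3 C4 : R) (y y' : R -> R)
  (ht0 : 1 < t0)
  (hdelta0 : 0 <= delta) (hdelta1 : delta < 4 / 5)
  (hy_nonneg : forall t, t0 <= t -> 0 <= y t)
  (hy_mono : forall s t, t0 <= s -> s <= t -> y s <= y t)
  (hy_der : forall t, t0 < t -> is_derive t 1 y (y' t))
  (hC3 : 0 < C3) (hC4 : 0 < C4)
  (hineq : forall t, t0 <= t ->
     y t <= C3 * t `^ delta * y' t
            + C4 * t `^ ((5 * delta - 1) / 2) * (y' t) `^ (3 / 2))
  (T v t : R) :
  t0 < T -> 0 < v ->
  v * (2 * C4 * 2 `^ `|(5 * delta - 1) / 2| * 2 `^ (4 - 5 * delta)) <= 1 ->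
  2 * C3 * 2 `^ delta * 2 `^ (4 - 5 * delta) <= T `^ (1 - delta) ->
  T <= t ->
  2 * C4 * 2 `^ `|(5 * delta - 1) / 2| * v ^+ 3 * t `^ (4 - 5 * delta) <= y t ->
  2 * C4 * 2 `^ `|(5 * delta - 1) / 2| * v ^+ 3 * (2 * t) `^ (4 - 5 * delta)
    <= y (2 * t).
Proof.
set e := 4 - 5 * delta; set q := (5 * delta - 1) / 2.
set D := 2 `^ `|q|; set P := 2 `^ e.
move=> hT hv hvL hM hTt hb.
have t0t : t0 < t by lra.
have tpos : 0 < t by lra.
have [xi xiI hmvt] : exists2 c, c \in `]t, 2 * t[%R & y (2 * t) - y t = y' c * (2 * t - t).
  apply: MVT; first by lra.
    by move=> x; rewrite in_itv /= => /andP[h1 h2]; apply: hy_der; lra.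
  apply: derivable_within_continuous => x; rewrite in_itv/= => /andP[h1 h2].
  have hx : t0 < x by lra.
  by case: (hy_der x hx).
move: xiI; rewrite in_itv /= => /andP[xi1 xi2].
have dxi : 0 <= y' xi by apply: (der_ge0 _ _ _ _ hy_mono hy_der); lra.
have Yxi : y t <= y xi by apply: hy_mono; lra.
have ineq := hineq xi (ltW (lt_trans t0t xi1)).
have Yge0 : 0 <= y t by apply: hy_nonneg; lra.
have e2 : y (2 * t) = y t + t * y' xi by lra.
rewrite e2.
have P0 : 0 < P by apply: powR_gt0.
have D0 : 0 < D by apply: powR_gt0.
have te0 : 0 < t `^ e by apply: powR_gt0.
rewrite (powRM _ (ler0n _ 2) (ltW tpos)) -/P.
suff : 2 * C4 * D * v ^+ 3 * (P * t `^ e) <= t * y' xi by lra.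
have hbY : 2 * C4 * D * v ^+ 3 * t `^ e <= y xi by lra.
have [hA|hB] : y t / 2 <= C3 * xi `^ delta * y' xi \/
               y t / 2 <= C4 * xi `^ q * y' xi `^ (3 / 2).
  by case: (leP (y t / 2) (C3 * xi `^ delta * y' xi)) => h; [left|right]; lra.
-
  set Q := 2 `^ delta; set U := t `^ delta; set W := t `^ (1 - delta).
  set X := xi `^ delta; set Z := y' xi.
  have Q0 : 0 < Q by apply: powR_gt0.
  have U0 : 0 < U by apply: powR_gt0.
  have {}hA : y t / 2 <= C3 * X * Z := hA.
  have XQU : X <= Q * U.
    rewrite /X /Q /U -powRM; try lra.
    apply: (ge0_ler_powR hdelta0); rewrite ?nnegrE; lra.
  have tUW : t = U * W.
    rewrite /U /W -powRD; last by apply/implyP => _; rewrite gt_eqF.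
    by rewrite addrC subrK powRr1 // ltW.
  have MW : 2 * C3 * Q * P <= W.
    apply: (le_trans hM); rewrite /W; apply: ge0_ler_powR; rewrite ?nnegrE; lra.
  have s1 : P * (y t) <= P * (2 * C3 * X * Z).
    apply: ler_wpM2l; lra.
  have s2 : P * (2 * C3 * X * Z) <= P * (2 * C3 * (Q * U) * Z).
    apply: ler_wpM2l; first lra.
    apply: ler_wpM2r => //; apply: ler_wpM2l; lra.
  have s3 : (2 * C3 * Q * P) * (U * Z) <= W * (U * Z).
    by apply: ler_wpM2r MW; apply: mulr_ge0; [lra | exact: dxi].
  have s4 : P * (2 * C4 * D * v ^+ 3 * t `^ e) <= P * y t.
    by apply: ler_wpM2l; lra.
  have -> : t * Z = W * (U * Z) by rewrite tUW; ring.
  have e5 : P * (2 * C3 * (Q * U) * Z) = (2 * C3 * Q * P) * (U * Z) by ring.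
  have e6 : P * (2 * C4 * D * v ^+ 3 * t `^ e) = 2 * C4 * D * v ^+ 3 * (P * t `^ e) by ring.
  lra.
-
  set Xq := xi `^ q; set Z := y' xi; set Z32 := Z `^ (3 / 2).
  have {}hB : y t / 2 <= C4 * Xq * Z32 := hB.
  have tq0 : 0 < t `^ q by apply: powR_gt0.
  have Z320 : 0 <= Z32 by apply: powR_ge0.
  have B1 : Xq <= D * t `^ q.
    have -> : Xq = t `^ q * (xi / t) `^ q.
      rewrite -powRM; last 2 first.
        - lra.
        - by apply: divr_ge0; lra.
      by rewrite /Xq mulrC divfK // gt_eqF.
    rewrite mulrC; apply: ler_wpM2r; first lra.
    have h1 : 1 <= xi / t by rewrite ler_pdivlMr // mul1r ltW.
    have h2 : xi / t <= 2 by rewrite ler_pdivrMr // ltW.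
    apply: (le_trans (ler_powR h1 (ler_norm q))).
    rewrite /D; apply: (ge0_ler_powR (normr_ge0 q)) => //; rewrite nnegrE; lra.
  have B2 : v ^+ 3 * t `^ e <= t `^ q * Z32.
    have CD0 : 0 < 2 * C4 * D by apply: mulr_gt0 => //; lra.
    rewrite -(ler_pM2l CD0).
    have s1 : C4 * Xq * Z32 <= C4 * (D * t `^ q) * Z32.
      by apply: ler_wpM2r => //; apply: ler_wpM2l; lra.
    have e1 : 2 * C4 * D * (v ^+ 3 * t `^ e) = 2 * C4 * D * v ^+ 3 * t `^ e by ring.
    have e2' : 2 * C4 * D * (t `^ q * Z32) = 2 * (C4 * (D * t `^ q) * Z32) by ring.
    lra.
  have B3 : t `^ e = t `^ q * t `^ ((e - 1) * (3 / 2)).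
    rewrite -powRD; last by apply/implyP => _; rewrite gt_eqF.
    congr (t `^ _); rewrite /e /q; field; done.
  have B4 : v ^+ 3 * t `^ ((e - 1) * (3 / 2)) <= Z32.
    rewrite -(ler_pM2l tq0); move: B2; rewrite B3.
    have -> : v ^+ 3 * (t `^ q * t `^ ((e - 1) * (3 / 2))) = t `^ q * (v ^+ 3 * t `^ ((e - 1) * (3 / 2))) by ring.
    by [].
  set A := v ^+ 2 * t `^ (e - 1).
  have A0 : 0 <= A by apply: mulr_ge0; [apply: exprn_ge0; lra | apply: powR_ge0].
  have B5 : A `^ (3 / 2) = v ^+ 3 * t `^ ((e - 1) * (3 / 2)).
    rewrite /A powRM; last 2 first.
      - by apply: exprn_ge0; lra.
      - by apply: powR_ge0.
    rewrite -powRrM -(powR_mulrn 2 (ltW hv)) -powRrM -(powR_mulrn 3 (ltW hv)).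
    by congr (_ `^ _ * _); field; done.
  have B6 : A <= Z.
    have h0 : A `^ (3 / 2) <= Z32 by rewrite B5.
    have h := ge0_ler_powR (r := 2 / 3) _ _ _ h0.
    move: h; rewrite -!powRrM.
    have -> : 3 / 2 * (2 / 3) = 1 :> R by field; done.
    rewrite (powRr1 A0) (powRr1 dxi); apply; [lra | by rewrite nnegrE powR_ge0 | by rewrite nnegrE powR_ge0].
  have B7 : t * A = v ^+ 2 * t `^ e.
    rewrite /A mulrCA; congr (_ * _).
    rewrite -{1}(powRr1 (ltW tpos)) -powRD; last by apply/implyP => _; rewrite gt_eqF.
    by congr (t `^ _); ring.
  have B8 : t * A <= t * Z by apply: ler_wpM2l; lra.
  have B9 : (v * (2 * C4 * D * P)) * (v ^+ 2 * t `^ e) <= 1 * (v ^+ 2 * t `^ e).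
    apply: ler_wpM2r => //; apply: mulr_ge0; [apply: exprn_ge0; lra | lra].
  have e9 : (v * (2 * C4 * D * P)) * (v ^+ 2 * t `^ e) = 2 * C4 * D * v ^+ 3 * (P * t `^ e) by ring.
  lra.
Qed.


Theorem lemma2p2 (R : realType) (t0 delta C3 C4 : R) (y y' : R -> R)
  (ht0 : 1 < t0)
  (hdelta0 : 0 <= delta) (hdelta1 : delta < 4 / 5)
  (hy_nonneg : forall t, t0 <= t -> 0 <= y t)
  (hy_mono : forall s t, t0 <= s -> s <= t -> y s <= y t)
  (hy_nz : exists t, t0 <= t /\ y t != 0)
  (hy_der : forall t, t0 < t -> is_derive t 1 y (y' t))
  (hy_der0 : h^-1 *: (y (h + t0) - y t0) @[h --> 0^'+] --> y' t0)
  (hC3 : 0 < C3) (hC4 : 0 < C4)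
  (hineq : forall t, t0 <= t ->
     y t <= C3 * t `^ delta * y' t
            + C4 * t `^ ((5 * delta - 1) / 2) * (y' t) `^ (3 / 2)) :
  (0 < limf_einf (fun t : R => (t `^ (5 * delta - 4) * y t)%:E)
                 (pinfty_nbhs R))%E.
Proof.
have [t1 [ht1 hy1]] := hy_nz.
have y1 : 0 < y t1 by rewrite lt_neqAle eq_sym hy1 hy_nonneg.
have step' := step _ _ _ _ _ _ _ ht0 hdelta0 hdelta1 hy_nonneg hy_mono hy_der hC3 hC4 hineq.
set e := 4 - 5 * delta in step'.
set D := 2 `^ `|(5 * delta - 1) / 2| in step'.
set P := 2 `^ e in step'.
have e0 : 0 < e by rewrite /e; lra.
have P0 : 0 < P by apply: powR_gt0.
have D0 : 0 < D by apply: powR_gt0.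
set M := 2 * C3 * 2 `^ delta * P.
have M0 : 0 <= M by rewrite /M; apply: mulr_ge0; [apply: mulr_ge0; [lra | apply: powR_ge0] | lra].
set T := Num.max (t1 + 1) (M `^ (1 - delta)^-1).
have T1 : t1 + 1 <= T by rewrite /T le_max lexx.
have TM : M `^ (1 - delta)^-1 <= T by rewrite /T le_max lexx orbT.
have hT : t0 < T by lra.
have T0 : 0 < T by lra.
have hM : M <= T `^ (1 - delta).
  have -> : M = (M `^ (1 - delta)^-1) `^ (1 - delta).
    rewrite -powRrM mulVf ?powRr1 //; lra.
  apply: ge0_ler_powR => //; [lra | rewrite nnegrE; apply: powR_ge0 | rewrite nnegrE; lra].
have yT : 0 < y T by apply: (lt_le_trans y1); apply: hy_mono; lra.
set L := 2 * C4 * D * P.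
have L0 : 0 < L by rewrite /L; apply: mulr_gt0 => //; apply: mulr_gt0 => //; lra.
have TE0 : 0 < T `^ e by apply: powR_gt0.
set v := Num.min 1 (Num.min L^-1 (y T / (T `^ e * (2 * C4 * D)))).
have v0 : 0 < v.
  rewrite /v !lt_min ltr01 invr_gt0 L0 /=; apply: divr_gt0 => //.
  by apply: mulr_gt0 => //; apply: mulr_gt0 => //; lra.
have v1 : v <= 1 by rewrite /v ge_min lexx.
have vL : v * L <= 1.
  have : v <= L^-1 by rewrite /v !ge_min lexx orbT.
  by rewrite -(ler_pM2r L0) mulVf // gt_eqF.
set b := 2 * C4 * D * v ^+ 3.
have b0 : 0 < b by rewrite /b; apply: mulr_gt0; [apply: mulr_gt0 => //; lra | apply: exprn_gt0].
have base : b * T `^ e <= y T.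
  have v3 : v ^+ 3 <= v by nra.
  have hvT : v * (T `^ e * (2 * C4 * D)) <= y T.
    rewrite -ler_pdivlMr; last by apply: mulr_gt0 => //; apply: mulr_gt0 => //; lra.
    by rewrite /v !ge_min lexx !orbT.
  have CT : 0 <= 2 * C4 * D * T `^ e by apply: mulr_ge0 => //; [apply: mulr_ge0 => //; lra | lra].
  have : (2 * C4 * D * T `^ e) * v ^+ 3 <= (2 * C4 * D * T `^ e) * v by apply: ler_wpM2l.
  have -> : b * T `^ e = (2 * C4 * D * T `^ e) * v ^+ 3 by rewrite /b; ring.
  rewrite (_ : v * (T `^ e * (2 * C4 * D)) = (2 * C4 * D * T `^ e) * v) in hvT; last by ring.
  lra.
have dyad : forall n : nat, b * (2 ^+ n * T) `^ e <= y (2 ^+ n * T).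
  elim=> [|n IH]; first by rewrite expr0 mul1r.
  rewrite exprS -mulrA; apply: (step' T v) => //.
  - have : 1 <= 2 ^+ n :> R by apply: exprn_ege1; lra.
    nra.
have G : forall (k : nat) s, 2 ^+ k * T <= s <= 2 ^+ k.+1 * T -> b / P * s `^ e <= y s.
  move=> k s /andP[hs1 hs2].
  have u1 : 1 <= 2 ^+ k :> R by apply: exprn_ege1; lra.
  have u0 : T <= 2 ^+ k * T by nra.
  have hu := dyad k.
  have se : s `^ e <= P * (2 ^+ k * T) `^ e.
    rewrite /P -powRM; [|lra|lra].
    apply: (ge0_ler_powR (ltW e0)); rewrite ?nnegrE; [lra|lra|].
    by rewrite mulrA -exprS.
  have yus : y (2 ^+ k * T) <= y s by apply: hy_mono; lra.
  have : b / P * s `^ e <= b / P * (P * (2 ^+ k * T) `^ e).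
    by apply: ler_wpM2l => //; apply: divr_ge0; lra.
  have -> : b / P * (P * (2 ^+ k * T) `^ e) = b * (2 ^+ k * T) `^ e.
    by field; rewrite gt_eqF.
  lra.
have interp : forall (n : nat) s, T <= s <= 2 ^+ n * T -> b / P * s `^ e <= y s.
  elim=> [|n IH] s /andP[hs1 hs2].
    apply: (G 0%N); rewrite expr0 mul1r in hs2 *; rewrite expr1 hs1 /=; lra.
  case: (leP s (2 ^+ n * T)) => hsn.
    by apply: IH; rewrite hs1 hsn.
  by apply: (G n); rewrite hs2 ltW.
have final : forall s, T <= s -> b / P <= s `^ (5 * delta - 4) * y s.
  move=> s hs.
  have s0 : 0 < s by lra.
  have [n hn] : exists n : nat, s <= 2 ^+ n * T.
    exists (Num.bound (s / T)).
    have h1 := archi_boundP (divr_ge0 (ltW s0) (ltW T0)).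
    have h2 : ((Num.bound (s / T))%:R : R) <= 2 ^+ (Num.bound (s / T)).
      rewrite -natrX ler_nat; apply: ltnW; exact: ltn_expl.
    have := lt_le_trans h1 h2.
    by rewrite ltr_pdivrMr // => /ltW.
  have := interp n s; rewrite hs hn => /(_ isT) h.
  have -> : 5 * delta - 4 = - e by rewrite /e; ring.
  have se0 : 0 < s `^ e by apply: powR_gt0.
  by rewrite powRN [X in _ <= X]mulrC ler_pdivlMr.
rewrite limf_einfE.
have c0 : (0 < (b / P)%:E)%E by rewrite lte_fin divr_gt0.
apply: (lt_le_trans c0).
apply: (@le_trans _ _ (ereal_inf [set (t `^ (5 * delta - 4) * y t)%:E | t in [set t | T <= t]])).
  apply: le_ereal_inf_tmp => _ [s hs <-]; rewrite lee_fin; exact: final.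
apply: ereal_sup_ubound; exists [set t | T <= t] => //.
exists T; split; first exact: num_real.
by move=> x /ltW.
Qed.
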